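(* Let $Z_3(X)=\phi_3X^3+\phi_2X^2+\phi_1X+\phi_0$ be a real polynomial of degree $3$ with $\phi_3>0$ all of whose roots have strictly negative real part, and let $Z_4(X)=\varphi_4X^4+\varphi_3X^3+\varphi_2X^2+\varphi_1X+\varphi_0$ be a real polynomial of degree $4$ with $\varphi_4>0$. Then there exists $\psi_0$ such that for every $\psi>\psi_0$, all roots of the polynomial $Z_4(X)+\psi Z_3(X)$ have strictly negative real part.
   Context: A polynomial is called stable if all its (complex) roots have strictly negative real part. *)

(* Defs.v *)
From mathcomp Require Import all_boot all_order all_algebra.
From mathcomp Require Import reals.
From mathcomp.real_closed Require Import complex.
Set Implicit Arguments. Unset Strict Implicit. Unset Printing Implicit Defensive.
Import Order.TTheory GRing.Theory Num.Theory.
Local Open Scope ring_scope.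

Definition stable (R : realType) (p : {poly R}) : Prop :=
  forall z : R[i], root (map_poly (real_complex R) p) z -> complex.Re z < 0.

(* Main.v *)
Require Import Defs.
From mathcomp Require Import all_boot all_order all_algebra.
From mathcomp Require Import reals.
From mathcomp.real_closed Require Import complex.
From mathcomp Require Import ring lra.
Import Order.TTheory GRing.Theory Num.Theory.
Local Open Scope ring_scope.
Local Open Scope complex_scope.
Set Implicit Arguments. Unset Strict Implicit.
Section S.
Variable R : realType.
Lemma final (t phi K u d1 d2 d3 e1 e2 e3 A1 A2 A3 : R) :
  0 < phi -> 1 <= u -> 0 < e1 -> 0 < e2 -> 0 < e3 -> 0 < A1 -> 0 < A2 -> 0 < A3 ->
  0 < t ->
  t * phi * (d1 * (d2 * d3)) <= K * u ^+ 2 ->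
  e1 * u <= d1 * A1 -> e2 * u <= d2 * A2 -> e3 * u <= d3 * A3 ->
  K / (phi * (e1 * e2 * e3) / (A1 * A2 * A3)) < t -> False.
Proof.
move=> p0 u1 e10 e20 e30 A10 A20 A30 t0 H h1 h2 h3.
have Ap : 0 < A1 * A2 * A3 by rewrite !mulr_gt0.
have ep : 0 < e1 * e2 * e3 by rewrite !mulr_gt0.
have cp : 0 < phi * (e1 * e2 * e3) / (A1 * A2 * A3) by rewrite divr_gt0 // mulr_gt0.
rewrite ltr_pdivrMr // => Kt.
have u0 : 0 < u by lra.
have h : (e1 * u) * (e2 * u) * (e3 * u) <= (d1 * A1) * (d2 * A2) * (d3 * A3).
  apply: ler_pM; [| |apply: ler_pM|] => //; rewrite ?mulr_ge0 //; lra.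
have : t * phi * (e1 * e2 * e3) * u ^+ 3 <= K * u ^+ 2 * (A1 * A2 * A3).
  apply: le_trans (_ : t * phi * ((d1 * A1) * (d2 * A2) * (d3 * A3)) <= _).
    have -> : t * phi * (e1 * e2 * e3) * u ^+ 3 = t * phi * ((e1 * u) * (e2 * u) * (e3 * u)) by ring.
    by apply: ler_wpM2l => //; rewrite mulr_ge0 //; lra.
  have -> : t * phi * ((d1 * A1) * (d2 * A2) * (d3 * A3)) = t * phi * (d1 * (d2 * d3)) * (A1 * A2 * A3) by ring.
  by apply: ler_wpM2r => //; lra.
have -> : t * phi * (e1 * e2 * e3) * u ^+ 3 = (t * (phi * (e1 * e2 * e3) / (A1 * A2 * A3))) * u * u ^+ 2 * (A1 * A2 * A3).
  field; lra.
rewrite ler_pM2r // ler_pM2r ?exprn_gt0 //.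
have : t * (phi * (e1 * e2 * e3) / (A1 * A2 * A3)) * 1 <= t * (phi * (e1 * e2 * e3) / (A1 * A2 * A3)) * u.
  by rewrite ler_pM2l // mulr_gt0.
lra.
Qed.
Local Notation nc := (@Normc.normc R).
Lemma nc_ge0 (z : R[i]) : 0 <= nc z.
Proof. by case: z => a b /=; rewrite sqrtr_ge0. Qed.
Lemma nc_ge_Re (z : R[i]) : complex.Re z <= nc z.
Proof.
case: z => a b /=; apply: le_trans (ler_norm a) _.
by rewrite -sqrtr_sqr ler_wsqrtr // lerDl sqr_ge0.
Qed.
Lemma nc_real (x : R) : nc (x%:C) = `|x|.
Proof. by rewrite /= expr0n /= addr0 sqrtr_sqr. Qed.
Lemma Re_lin (a b : R) (z : R[i]) : complex.Re (a%:C * z + b%:C) = a * complex.Re z + b.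
Proof. by case: z => x y /=; rewrite mul0r subr0. Qed.
Lemma Re_sub (z w : R[i]) : complex.Re (z - w) = complex.Re z - complex.Re w.
Proof. by case: z; case: w. Qed.
Lemma nc_lowfac (z r : R[i]) : 0 <= complex.Re z -> complex.Re r < 0 ->
  (- complex.Re r) * (1 + nc z) <= nc (z - r) * (1 + nc r + - complex.Re r).
Proof.
move=> hz hr.
have h1 := nc_ge_Re (z - r); rewrite Re_sub in h1.
have h2 : nc z <= nc (z - r) + nc r.
  by have := le_normcD (z - r) r; rewrite subrK.
have h3 := nc_ge0 r.
have h4 : - complex.Re r <= nc (z - r) by lra.
have h5 : (- complex.Re r) * (1 + nc r) <= nc (z - r) * (1 + nc r) by apply: ler_wpM2r => //; lra.
have h6 : (- complex.Re r) * (nc z - nc r) <= (- complex.Re r) * nc (z - r) by apply: ler_wpM2l => //; lra.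
lra.
Qed.
End S.

Theorem lemma1 (R : realType) (Z3 Z4 : {poly R}) :
  size Z3 = 4%N -> 0 < lead_coef Z3 -> stable Z3 ->
  size Z4 = 5%N -> 0 < lead_coef Z4 ->
  exists psi0 : R, forall psi : R, psi0 < psi -> stable (Z4 + psi *: Z3).
Proof.
move=> s3 l3 st3 s4 l4.
set f := real_complex R.
set P3 := map_poly f Z3.
have [s Hs] := closed_field_poly_normal P3.
have lP3 : lead_coef P3 = f (lead_coef Z3) by rewrite lead_coef_map.
have Z3n0 : Z3 != 0 by rewrite -size_poly_eq0 s3.
have ss : size s = 3%N.
  have := size_map_poly f Z3; rewrite -/P3 s3 {1}Hs size_scale ?size_prod_XsubC.
    by case.
  by rewrite lP3 /f eq_complex /= negb_and (gt_eqF l3).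
have rootsneg : forall r, r \in s -> complex.Re r < 0.
  move=> r rs; apply: st3; rewrite -/P3 Hs rootZ ?root_prod_XsubC //.
  by rewrite lP3 /f eq_complex /= negb_and (gt_eqF l3).
case: s Hs ss rootsneg => [|r1 [|r2 [|r3 [|]]]] //= Hs _ rootsneg.
have n1 := rootsneg r1; have n2 := rootsneg r2; have n3 := rootsneg r3.
rewrite !inE !eqxx ?orbT in n1 n2 n3.
have {}n1 := n1 isT; have {}n2 := n2 isT; have {}n3 := n3 isT.
set q := Z4 %/ Z3; set rho := Z4 %% Z3.
have srho : (size rho <= 3)%N by have := ltn_modp Z4 Z3; rewrite Z3n0 s3.
have sq : size q = 2%N by rewrite size_divp // s3 s4.
have Zdiv : Z4 = q * Z3 + rho by apply: divp_eq.
have lq : lead_coef q * lead_coef Z3 = lead_coef Z4.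
  rewrite [in RHS]Zdiv lead_coefDl ?lead_coefM //.
  rewrite size_mul ?s3 ?sq //; first by apply: leq_ltn_trans srho _.
  by rewrite -size_poly_eq0 sq.
have q1p : 0 < q`_1.
  have -> : q`_1 = lead_coef q by rewrite /lead_coef sq.
  have : 0 < lead_coef q * lead_coef Z3 by rewrite lq.
  by rewrite pmulr_lgt0.
set a := q`_1; set b := q`_0; set phi := lead_coef Z3.
set K := `|rho`_0| + `|rho`_1| + `|rho`_2|.
set e1 := - complex.Re r1; set e2 := - complex.Re r2; set e3 := - complex.Re r3.
set A1 := 1 + Normc.normc r1 + e1; set A2 := 1 + Normc.normc r2 + e2.
set A3 := 1 + Normc.normc r3 + e3.
exists (K / (phi * (e1 * e2 * e3) / (A1 * A2 * A3)) - b).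
move=> psi hpsi z hz; rewrite ltNge; apply/negP => hx.
have K0 : 0 <= K by rewrite /K !addr_ge0.
have e10 : 0 < e1 by rewrite /e1; lra.
have e20 : 0 < e2 by rewrite /e2; lra.
have e30 : 0 < e3 by rewrite /e3; lra.
have A10 : 0 < A1 by have := nc_ge0 r1; rewrite /A1; lra.
have A20 : 0 < A2 by have := nc_ge0 r2; rewrite /A2; lra.
have A30 : 0 < A3 by have := nc_ge0 r3; rewrite /A3; lra.
have cp : 0 < phi * (e1 * e2 * e3) / (A1 * A2 * A3) by rewrite divr_gt0 // ?mulr_gt0.
have t0 : 0 < b + psi.
  have : 0 <= K / (phi * (e1 * e2 * e3) / (A1 * A2 * A3)) by rewrite divr_ge0 // ltW.
  lra.
have n0 := nc_ge0 z.
apply: (@final R (b + psi) phi K (1 + Normc.normc z) (Normc.normc (z - r1))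
  (Normc.normc (z - r2)) (Normc.normc (z - r3)) e1 e2 e3 A1 A2 A3) => //.
- lra.
- have M : map_poly f (Z4 + psi *: Z3) = map_poly f q * P3 + map_poly f rho + (f psi)%:P * P3.
    rewrite /P3 /f -mul_polyC {1}Zdiv !(@rmorphD _ _ (map_poly (real_complex R))).
    rewrite !(rmorphM (map_poly (real_complex R))).
    congr (_ + _ * _); exact: map_polyC.
  rewrite /root M !hornerD !hornerM hornerC in hz.
  rewrite -/P3 Hs !hornerZ horner_prod !big_cons big_nil !hornerXsubC mulr1 lP3 in hz.
  rewrite (horner_coef_wide _ (n:=2)) ?size_map_poly ?sq // in hz.
  rewrite (horner_coef_wide _ (n:=3)) ?size_map_poly // in hz.
  rewrite !big_ord_recr !big_ord0 /= !coef_map /= -/a -/b -/phi in hz.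
  set Pz := (z - r1) * ((z - r2) * (z - r3)) in hz.
  set rz := (0 + f rho`_0 * z ^+ 0 + f rho`_1 * z ^+ 1 + f rho`_2 * z ^+ 2) in hz.
  have E : ((f a) * z + f (b + psi)) * (f phi * Pz) = - rz.
    apply/eqP; rewrite -addr_eq0 -[X in _ == X](eqP hz) /f (rmorphD (real_complex R)).
    apply/eqP; ring.
  have := congr1 (@Normc.normc R) E.
  rewrite normcN !Normc.normcM nc_real (gtr0_norm l3) => E2.
  have hw : b + psi <= Normc.normc (f a * z + f (b + psi)).
    apply: le_trans (nc_ge_Re _); rewrite Re_lin.
    have : 0 <= a * complex.Re z by rewrite mulr_ge0 // ltW.
    lra.
  have hr : Normc.normc rz <= K * (1 + Normc.normc z) ^+ 2.
    rewrite /rz add0r expr0 expr1 mulr1.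
    apply: le_trans (le_normcD _ _) _.
    apply: le_trans (lerD (le_normcD _ _) (lexx _)) _.
    rewrite !Normc.normcM !nc_real.
    move: (Normc.normc z) n0 => n n0.
    have u1 : 1 <= (1 + n) ^+ 2 by rewrite expr2; nra.
    have u2 : n <= (1 + n) ^+ 2 by rewrite expr2; nra.
    have u3 : n * n <= (1 + n) ^+ 2 by rewrite !expr2; nra.
    have v1 : `|rho`_0| * 1 <= `|rho`_0| * (1 + n) ^+ 2 by apply: ler_wpM2l.
    have v2 : `|rho`_1| * n <= `|rho`_1| * (1 + n) ^+ 2 by apply: ler_wpM2l.
    have v3 : `|rho`_2| * (n * n) <= `|rho`_2| * (1 + n) ^+ 2 by apply: ler_wpM2l.
    rewrite /K; lra.
  apply: le_trans hr; rewrite -E2 -mulrA.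
  apply: ler_wpM2r => //.
  by rewrite !mulr_ge0 ?nc_ge0 // ltW.
- exact: nc_lowfac.
- exact: nc_lowfac.
- exact: nc_lowfac.
- lra.
Qed.
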